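(* Let $k$ be a commutative ring and $A$ a commutative $k$-algebra. If the homomorphism of graded $A$-algebras $\theta_{A/k}:\operatorname{gr}\operatorname{Diff}_{A/k}\to(\operatorname{Sym}\Omega_{A/k})^*_{gr}$ is surjective (hence an isomorphism), then $\operatorname{Ider}_k(A)=\operatorname{Der}_k(A)$.
   Context: $\operatorname{Diff}^{(n)}_{A/k}$: $k$-linear differential operators of order $\le n$ (order $0$ = multiplications by elements of $A$; $\varphi$ has order $\le i+1$ iff $[\varphi,a]=\varphi\circ a-a\circ\varphi$ has order $\le i$ for all $a$); $\operatorname{gr}\operatorname{Diff}_{A/k}$ is the associated graded commutative $A$-algebra, $\sigma_n$ the symbol. $(\operatorname{Sym}\Omega_{A/k})^*_{gr}=\bigoplus_n\operatorname{Hom}_A(\operatorname{Sym}^n\Omega_{A/k},A)$ with the shuffle product. $\theta_{A/k}=\bigoplus_n\theta_n$, where for $P\in\operatorname{Diff}^{(n)}_{A/k}$, $\theta_n(\sigma_n(P))$ is the $A$-linear form on $\operatorname{Sym}^n\Omega_{A/k}$ with $dx_1\cdots dx_n\mapsto\sum_{L\subset[n]}(-1)^{\sharp L}x_LP(x_{[n]\setminus L})$ ($x_L=\prod_{i\in L}x_i$); it is a well-defined injective homomorphism of graded $A$-algebras. $\operatorname{Ider}_k(A)$ is the set of $\delta\in\operatorname{Der}_k(A)$ for which there is an infinite sequence $(D_0=\mathrm{Id},D_1=\delta,D_2,\dots)$ of $k$-linear maps $A\to A$ with $D_i(xy)=\sum_{r+s=i}D_r(x)D_s(y)$ (a Hasse–Schmidt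 derivation). *)

(* Defs.v *)
From HB Require Import structures.
From mathcomp Require Import all_boot all_order all_algebra all_fingroup.
Set Implicit Arguments. Unset Strict Implicit. Unset Printing Implicit Defensive.
Import GRing.Theory.
Local Open Scope ring_scope.

Section Defs.
(* k : commutative ring; A : commutative k-algebra, given by its structure map f. *)
Variables (k A : comPzRingType) (f : {rmorphism k -> A}).

Definition klinear (D : A -> A) : Prop :=
  (forall x y, D (x + y) = D x + D y) /\ (forall (c : k) x, D (f c * x) = f c * D x).

Definition isDer (D : A -> A) : Prop :=
  klinear D /\ forall x y, D (x * y) = x * D y + y * D x.

Fixpoint ordLe (n : nat) (D : A -> A) : Prop :=
  match n with
  | O => exists a : A, forall x, D x = a * x
  | S m => forall a : A, ordLe m (fun x => D (a * x) - a * D x)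
  end.

Definition isDiffOp (n : nat) (D : A -> A) : Prop := klinear D /\ ordLe n D.

(* Hom_A(Sym^n Omega_{A/k}, A), written out: symmetric maps A^n -> A that are
   k-derivations in each argument (phi (x_1,..,x_n) = value on dx_1 ... dx_n). *)
Definition symMultiDer (n : nat) (phi : ('I_n -> A) -> A) : Prop :=
  (forall (i : 'I_n) (x : 'I_n -> A),
      isDer (fun t => phi (fun j => if j == i then t else x j)))
  /\ (forall (s : {perm 'I_n}) (x : 'I_n -> A), phi (fun j => x (s j)) = phi x).

(* theta_n(sigma_n(P)) evaluated at dx_1 ... dx_n *)
Definition thetaVal (n : nat) (P : A -> A) (x : 'I_n -> A) : A :=
  \sum_(L : {set 'I_n})
     (-1) ^+ #|L| * (\prod_(i in L) x i) * P (\prod_(i in ~: L) x i).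

(* theta_{A/k} surjective: every element of each graded piece is theta_n(sigma_n(P)) *)
Definition theta_surjective : Prop :=
  forall (n : nat) (phi : ('I_n -> A) -> A), symMultiDer phi ->
    exists P : A -> A, isDiffOp n P /\ forall x, phi x = thetaVal P x.

Definition isHS (D : nat -> A -> A) : Prop :=
  (forall x, D 0%N x = x) /\ (forall i, klinear (D i)) /\
  (forall (i : nat) (x y : A), D i (x * y) = \sum_(r < i.+1) D r x * D (i - r)%N y).

Definition isIder (delta : A -> A) : Prop :=
  isDer delta /\ exists D : nat -> A -> A, isHS D /\ (forall x, D 1%N x = delta x).

End Defs.

(* Main.v *)
Require Import Defs.
From HB Require Import structures.
From mathcomp Require Import all_boot all_order all_algebra all_fingroup.
From Stdlib Require Import FunctionalExtensionality ClassicalEpsilon Classical.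
From mathcomp Require Import ring zify.
Unset Printing Implicit Defensive.
Import GRing.Theory.
Local Open Scope ring_scope.

Section Work.
Variables (k A : comPzRingType) (f : {rmorphism k -> A}).

Definition comm (G : A -> A) (a : A) : A -> A := fun y => G (a * y) - a * G y.

Fixpoint itc (m : nat) (G : A -> A) : ('I_m -> A) -> A -> A :=
  match m return ('I_m -> A) -> A -> A with
  | 0 => fun _ y => G y
  | m'.+1 => fun x y => itc m' (comm G (x ord0)) (fun j => x (lift ord0 j)) y
  end.

Definition thetaY m (G : A -> A) (x : 'I_m -> A) (y : A) : A :=
  \sum_(L : {set 'I_m}) (-1) ^+ #|L| * (\prod_(i in L) x i) * G ((\prod_(i in ~: L) x i) * y).

Lemma prod_split m (x : 'I_m.+1 -> A) (S : {set 'I_m.+1}) :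
 \prod_(i in S) x i = (if ord0 \in S then x ord0 else 1) *
    \prod_(j in lift ord0 @^-1: S) x (lift ord0 j).
Proof.
rewrite big_mkcond big_ord_recl /=; congr (_ * _).
rewrite [RHS]big_mkcond; apply: eq_bigr => j _; by rewrite inE.
Qed.

Lemma img_notin0 m (L : {set 'I_m}) : (ord0 : 'I_m.+1) \in lift ord0 @: L = false.
Proof.
apply/negbTE/imsetP => -[j _ /eqP]; by rewrite (negbTE (neq_lift _ _)).
Qed.

Lemma pre_img m (L : {set 'I_m}) : lift ord0 @^-1: (lift ord0 @: L) = L.
Proof. apply/setP => j; by rewrite inE mem_imset //; apply: lift_inj. Qed.

Lemma pre_img1 m (L : {set 'I_m}) : lift ord0 @^-1: (ord0 |: lift ord0 @: L) = L.
Proof.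
apply/setP => j; rewrite !inE mem_imset; last exact: lift_inj.
have := neq_lift (ord0 : 'I_m.+1) j; rewrite eq_sym => /negbTE -> //.
Qed.

Lemma sum_set_split m (F : {set 'I_m.+1} -> A) :
 \sum_L F L = \sum_(L : {set 'I_m}) (F (lift ord0 @: L) + F (ord0 |: (lift ord0 @: L))).
Proof.
rewrite big_split /= [LHS](bigID (fun L : {set 'I_m.+1} => ord0 \in L)) /= addrC.
congr (_ + _).
- rewrite (reindex_onto (fun L : {set 'I_m} => lift ord0 @: L) (fun L : {set 'I_m.+1} => lift ord0 @^-1: L)).
    apply: eq_bigl => L; by rewrite img_notin0 pre_img eqxx.
  move=> L HL; apply/setP => i; case: (unliftP ord0 i) => [j ->|->].
    by rewrite mem_imset ?inE //; apply: lift_inj.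
  by rewrite img_notin0 (negbTE HL).
- rewrite (reindex_onto (fun L : {set 'I_m} => ord0 |: lift ord0 @: L) (fun L : {set 'I_m.+1} => lift ord0 @^-1: L)).
    apply: eq_bigl => L; by rewrite pre_img1 eqxx !inE eqxx.
  move=> L HL; apply/setP => i; rewrite !inE; case: (unliftP ord0 i) => [j ->|->].
    by rewrite mem_imset ?inE ?(negbTE (neq_lift _ _)) //; apply: lift_inj.
  by rewrite eqxx HL.
Qed.

Lemma thetaY_itc m G x y : thetaY m G x y = itc m G x y.
Proof.
elim: m G x y => [|m IH] G x y.
  rewrite /thetaY /= (big_pred1 set0) => [|L]; last first.
    by apply/esym/eqP/setP => -[].
  by rewrite cards0 big_set0 !mul1r big1 ?mul1r // => -[].
rewrite /= -IH /thetaY sum_set_split; apply: eq_bigr => L _.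
have E : forall S : {set 'I_m.+1}, (-1)^+#|S| * \prod_(i in S) x i * G (\prod_(i in ~: S) x i * y) =
  ((if ord0 \in S then -1 else 1) * (-1)^+#|lift ord0 @^-1: S|) *
  ((if ord0 \in S then x ord0 else 1) * \prod_(j in lift ord0 @^-1: S) x (lift ord0 j)) *
  G ((if ord0 \in S then 1 else x ord0) * \prod_(j in ~: (lift ord0 @^-1: S)) x (lift ord0 j) * y).
  move=> S; rewrite -!prodr_const (prod_split _ (fun _ => -1)) !prod_split preimsetC inE.
  by case: (ord0 \in S).
rewrite !E img_notin0 pre_img !inE eqxx pre_img1 /=.
rewrite /comm !mul1r !mulrA; ring.
Qed.

Lemma itc_zero m x y : itc m (fun _ => 0) x y = 0.
Proof.
elim: m x y => [|m IH] x y //=.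
have -> : comm (fun _ => 0) (x ord0) = (fun _ => 0).
  by apply: functional_extensionality => z; rewrite /comm mulr0 subr0.
exact: IH.
Qed.

Lemma itc_add m G H x y :
  itc m (fun z => G z + H z) x y = itc m G x y + itc m H x y.
Proof.
elim: m G H x y => [|m IH] G H x y //=.
have -> : comm (fun z => G z + H z) (x ord0) =
   (fun z => comm G (x ord0) z + comm H (x ord0) z).
  by apply: functional_extensionality => z; rewrite /comm; ring.
exact: IH.
Qed.

Lemma itc_scale m G b x y :
  itc m (fun z => b * G z) x y = b * itc m G x y.
Proof.
elim: m G x y => [|m IH] G x y //=.
have -> : comm (fun z => b * G z) (x ord0) = (fun z => b * comm G (x ord0) z).
  by apply: functional_extensionality => z; rewrite /comm; ring.
exact: IH.
Qed.

Lemma itc_opp m G x y :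
  itc m (fun z => - G z) x y = - itc m G x y.
Proof.
have -> : (fun z => - G z) = (fun z => (-1) * G z).
  by apply: functional_extensionality => z; rewrite mulN1r.
by rewrite itc_scale mulN1r.
Qed.

Lemma itc_ord m G : ordLe m G -> forall j, (m < j)%N -> forall x y, itc j G x y = 0.
Proof.
elim: m G => [|m IH] G HG [|j] //= Hj x y.
  case: HG => a Ha.
  have -> : comm G (x ord0) = (fun _ => 0).
    by apply: functional_extensionality => z; rewrite /comm !Ha; ring.
  exact: itc_zero.
exact: (IH _ (HG (x ord0)) j Hj _ y).
Qed.

Definition ocons m (c : A) (x : 'I_m -> A) : 'I_m.+1 -> A :=
  fun i => if unlift ord0 i is Some j then x j else c.
Arguments ocons {m}.

Lemma ocons0 m c (x : 'I_m -> A) : ocons c x ord0 = c.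
Proof. by rewrite /ocons unlift_none. Qed.

Lemma oconsL m c (x : 'I_m -> A) j : ocons c x (lift ord0 j) = x j.
Proof. by rewrite /ocons liftK. Qed.

Lemma oconsL' m c (x : 'I_m -> A) : (fun j => ocons c x (lift ord0 j)) = x.
Proof. apply: functional_extensionality => j; exact: oconsL. Qed.

Lemma itc_cons m G c (x : 'I_m -> A) y : itc m.+1 G (ocons c x) y = itc m (comm G c) x y.
Proof. by rewrite /= ocons0 oconsL'. Qed.

Lemma itc_der m G a b (x : 'I_m -> A) y :
  itc m.+1 G (ocons (a * b) x) y =
  itc m.+2 G (ocons a (ocons b x)) y + b * itc m.+1 G (ocons a x) y
   + a * itc m.+1 G (ocons b x) y.
Proof.
rewrite !itc_cons.
have -> : comm G (a * b) = (fun z => comm (comm G a) b z + b * comm G a z + a * comm G b z).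
  by apply: functional_extensionality => z; rewrite /comm !mulrA; ring.
rewrite (itc_add _ (fun z => comm (comm G a) b z + b * comm G a z)) itc_add.
rewrite (itc_scale _ (comm G a)) (itc_scale _ (comm G b)).
by rewrite -itc_cons -(itc_cons _ _ b) -itc_cons.
Qed.

Lemma itc_addc m G c1 c2 (x : 'I_m -> A) y : klinear f G ->
  itc m.+1 G (ocons (c1 + c2) x) y = itc m.+1 G (ocons c1 x) y + itc m.+1 G (ocons c2 x) y.
Proof.
move=> [Hadd _]; rewrite !itc_cons.
have -> : comm G (c1 + c2) = (fun z => comm G c1 z + comm G c2 z).
  by apply: functional_extensionality => z; rewrite /comm mulrDl Hadd; ring.
by rewrite itc_add.
Qed.

Lemma itc_scalec m G c c1 (x : 'I_m -> A) y : klinear f G ->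
  itc m.+1 G (ocons (f c * c1) x) y = f c * itc m.+1 G (ocons c1 x) y.
Proof.
move=> [_ Hsc]; rewrite !itc_cons.
have -> : comm G (f c * c1) = (fun z => f c * comm G c1 z).
  by apply: functional_extensionality => z; rewrite /comm -mulrA Hsc; ring.
by rewrite itc_scale.
Qed.

Lemma thetaVal_itc m G (x : 'I_m -> A) : thetaVal G x = itc m G x 1.
Proof.
rewrite -thetaY_itc /thetaY /thetaVal; apply: eq_bigr => L _; by rewrite mulr1.
Qed.

Lemma thetaVal_add m G H (x : 'I_m -> A) :
  thetaVal (fun z => G z + H z) x = thetaVal G x + thetaVal H x.
Proof. by rewrite !thetaVal_itc itc_add. Qed.

Lemma thetaVal_sym m G (x : 'I_m -> A) (s : {perm 'I_m}) :
  thetaVal G (fun j => x (s j)) = thetaVal G x.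
Proof.
rewrite /thetaVal [RHS](reindex_inj (imset_inj (@perm_inj _ s))) /=.
apply: eq_bigr => L _.
have P : forall S : {set 'I_m}, \prod_(i in S) x (s i) = \prod_(i in s @: S) x i.
  move=> S; rewrite [RHS]big_mkcond [RHS](reindex_inj (@perm_inj _ s)) /= [LHS]big_mkcond.
  by apply: eq_bigr => i _; rewrite mem_imset //; apply: perm_inj.
rewrite card_imset; last exact: perm_inj.
rewrite !P (_ : s @: (~: L) = ~: (s @: L)) //.
apply/setP => i; rewrite [in RHS]inE -(permKV s i) !mem_imset ?inE //; exact: perm_inj.
Qed.


Lemma symMD m (phi : ('I_m.+1 -> A) -> A) :
 (forall (s : {perm 'I_m.+1}) x, phi (fun j => x (s j)) = phi x) ->
 (forall x' : 'I_m -> A, isDer f (fun t => phi (ocons t x'))) ->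
 symMultiDer f phi.
Proof.
move=> Hs H0; split => // i x.
pose s := tperm ord0 i.
have -> : (fun t => phi (fun j => if j == i then t else x j)) =
          (fun t => phi (ocons t (fun j => x (s (lift ord0 j))))).
  apply: functional_extensionality => t.
  rewrite -(Hs s); congr phi; apply: functional_extensionality => j.
  rewrite /ocons; case: (unliftP ord0 j) => [j' ->|->].
    rewrite -{1}(tpermL ord0 i) (inj_eq (@perm_inj _ s)).
    by have := neq_lift (ord0 : 'I_m.+1) j'; rewrite eq_sym => /negbTE ->.
  by rewrite tpermL eqxx.
exact: H0.
Qed.


Lemma sum_if_eq (i N : nat) (c : A) : (i < N)%N ->
  \sum_(r < N) (if r == i :> nat then c else 0) = c.
Proof. by move=> Hi; rewrite -big_mkcond big_ord1_eq Hi. Qed.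

Section Poly.
Variables (H : (1:A) != 0) (D : nat -> A -> A) (n : nat).
Definition Anz : Type := A.
HB.instance Definition _ := GRing.ComPzRing.on Anz.
HB.instance Definition _ := GRing.PzSemiRing_isNonZero.Build Anz H.

Definition Psi (x : A) : {poly Anz} := \poly_(i < n) ((if i == 0%N then 0 else D i x) : Anz).
Definition T m (x : 'I_m -> A) : A := (\prod_(i < m) Psi (x i))`_n.
Arguments T {m}.

Lemma Psi_coef i x : (Psi x)`_i = if (i < n)%N && (i != 0)%N then D i x else 0.
Proof. by rewrite coef_poly; case: (i < n)%N; case: (i == 0)%N. Qed.

Lemma Psi0 x : (Psi x)`_0 = 0.
Proof. by rewrite Psi_coef andbF. Qed.

Lemma prod_low m (x : 'I_m -> A) i : (i < m)%N -> (\prod_(j < m) Psi (x j))`_i = 0.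
Proof.
elim: m x i => [|m IH] x i // Hi.
rewrite big_ord_recl coefM big1 // => -[[|j] Hj] _ /=.
  by rewrite Psi0 mul0r.
rewrite IH ?mulr0 //; lia.
Qed.

Lemma T_big m (x : 'I_m -> A) : (n < m)%N -> T x = 0.
Proof. exact: prod_low. Qed.

Lemma prod_cons m c (x : 'I_m -> A) :
  \prod_(i < m.+1) Psi (ocons c x i) = Psi c * \prod_(i < m) Psi (x i).
Proof.
rewrite big_ord_recl ocons0; congr (_ * _); apply: eq_bigr => i _; by rewrite oconsL.
Qed.

Lemma T_sym m (x : 'I_m -> A) (s : {perm 'I_m}) : T (fun j => x (s j)) = T x.
Proof. by rewrite /T /= [in RHS](reindex_perm s). Qed.

Hypothesis hD0 : forall x, D 0 x = x.
Hypothesis hlin : forall i, (i < n)%N -> klinear f (D i).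
Hypothesis hHS : forall i, (i < n)%N -> forall x y,
  D i (x * y) = \sum_(r < i.+1) D r x * D (i - r)%N y.

Lemma Psi_add a b : Psi (a + b) = Psi a + Psi b.
Proof.
apply/polyP => i; rewrite coefD !Psi_coef.
case: (boolP ((i < n)%N && (i != 0)%N)) => [/andP[Hi _]|_]; last by rewrite addr0.
by case: (hlin _ Hi) => ->.
Qed.

Lemma Psi_scale c a : Psi (f c * a) = (f c : Anz) *: Psi a.
Proof.
apply/polyP => i; rewrite coefZ !Psi_coef.
case: (boolP ((i < n)%N && (i != 0)%N)) => [/andP[Hi _]|_]; last by rewrite mulr0.
by case: (hlin _ Hi) => _ ->.
Qed.

Lemma coef_eq_low (p q P : {poly Anz}) : (forall j, (j < n)%N -> p`_j = q`_j) ->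
  P`_0 = 0 -> (p * P)`_n = (q * P)`_n.
Proof.
move=> Hpq HP; rewrite !coefM !big_ord_recr /= subnn HP !mulr0; congr (_ + _).
by apply: eq_bigr => j _; rewrite Hpq.
Qed.

Lemma Psi_mul a b j : (j < n)%N ->
  (Psi (a * b))`_j = (Psi a * Psi b + (a : Anz) *: Psi b + (b : Anz) *: Psi a)`_j.
Proof.
move=> Hj; rewrite !coefD !coefZ coefM.
case: j Hj => [|j] Hj.
  by rewrite big_ord_recl big_ord0 !Psi0; ring.
rewrite Psi_coef Hj /= hHS //.
have E : forall r : 'I_j.+2, D r a * D (j.+1 - r)%N b =
   (Psi a)`_r * (Psi b)`_(j.+1 - r) + (if r == 0%N :> nat then a * D j.+1 b else 0)
    + (if r == j.+1 :> nat then D j.+1 a * b else 0).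
  move=> [r Hr] /=; rewrite !Psi_coef.
  case: r Hr => [|r] Hr /=.
    by rewrite hD0 subn0 Hj andbF /=; ring.
  have [->|Hne] := eqVneq r j.
    by rewrite subnn hD0 Hj /= eqxx andbF; ring.
  have H1 : (r.+1 < n)%N by lia.
  have H2 : (j.+1 - r.+1 < n)%N by lia.
  have H3 : (j.+1 - r.+1 != 0)%N by lia.
  by rewrite H1 H2 H3 /= eqSS (negbTE Hne); ring.
rewrite (eq_bigr _ (fun r _ => E r)) !big_split /= !sum_if_eq //.
rewrite !Psi_coef Hj /=; ring.
Qed.

Lemma KT m a b (x : 'I_m.+1 -> A) :
  T (ocons (a * b) x) = T (ocons a (ocons b x)) + b * T (ocons a x) + a * T (ocons b x).
Proof.
rewrite /T !prod_cons (coef_eq_low _ _ _ (Psi_mul a b)) ?prod_low //.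
rewrite !mulrDl !coefD -!scalerAl !coefZ mulrA; ring.
Qed.

Lemma T_add m c1 c2 (x : 'I_m -> A) :
  T (ocons (c1 + c2) x) = T (ocons c1 x) + T (ocons c2 x).
Proof. by rewrite /T !prod_cons Psi_add mulrDl coefD. Qed.

Lemma T_scale m c c1 (x : 'I_m -> A) :
  T (ocons (f c * c1) x) = f c * T (ocons c1 x).
Proof. by rewrite /T !prod_cons Psi_scale -scalerAl coefZ. Qed.


Hypothesis thS : theta_surjective f.

Definition Inv m := exists E, klinear f E /\
  forall j, (m < j)%N -> forall x : 'I_j -> A, thetaVal E x = T x.

Lemma Inv_base : Inv n.
Proof.
exists (fun _ => 0); split.
  by split => *; rewrite ?addr0 ?mulr0.
by move=> j Hj x; rewrite thetaVal_itc itc_zero T_big.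
Qed.

Lemma Inv_step m : Inv m.+2 -> Inv m.+1.
Proof.
case=> E [HE Hinv].
pose phi := fun x : 'I_m.+2 -> A => T x - thetaVal E x.
have Hphi : symMultiDer f phi.
  apply: symMD.
    by move=> s x; rewrite /phi T_sym thetaVal_sym.
  move=> x'; split; [split|].
  - by move=> c1 c2; rewrite /phi T_add !thetaVal_itc itc_addc //; ring.
  - by move=> c c1; rewrite /phi T_scale !thetaVal_itc itc_scalec //; ring.
  - move=> a b; rewrite /phi KT !thetaVal_itc itc_der.
    have := Hinv m.+3 (ltnSn _) (ocons a (ocons b x')); rewrite thetaVal_itc => ->.
    ring.
case: (thS _ _ Hphi) => P [[HPl HPo] HP].
exists (fun y => E y + P y); split.
  case: HE => HE1 HE2; case: HPl => HP1 HP2.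
  by split => *; rewrite ?HE1 ?HP1 ?HE2 ?HP2; ring.
move=> j Hj x; rewrite thetaVal_add.
have [Hlt|Heq] : (m.+2 < j)%N \/ j = m.+2 by lia.
  by rewrite Hinv // thetaVal_itc (itc_ord _ _ HPo) // addr0.
subst j; rewrite -HP /phi; ring.
Qed.

Lemma Inv1 : (1 < n)%N -> Inv 1.
Proof.
move=> Hn.
have G : forall d m, (m.+1 + d)%N = n -> Inv m.+1.
  elim=> [|d IH] m Hd.
    by rewrite addn0 in Hd; rewrite Hd; exact: Inv_base.
  apply: Inv_step; apply: IH; lia.
apply: (G (n - 1)%N 0%N); lia.
Qed.

Lemma step_final : (1 < n)%N -> exists Dn, klinear f Dn /\ forall a b,
  Dn (a * b) = \sum_(r < n.+1) (if r == n :> nat then Dn else D r) a *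
                 (if (n - r)%N == n then Dn else D (n - r)%N) b.
Proof.
move=> Hn; case: (Inv1 Hn) => E [[HE1 HE2] Hinv].
exists (fun y => E y - y * E 1); split.
  by split => *; rewrite ?HE1 ?HE2; ring.
move=> a b.
have H2 := Hinv 2 (ltnSn 1) (fun i : 'I_2 => if i == ord0 then a else b).
rewrite thetaVal_itc /T !big_ord_recl big_ord0 mulr1 /= in H2.
rewrite /comm !mulr1 in H2.
set Dn := fun y => E y - y * E 1.
have E2 : forall r : 'I_n.+1,
  (if r == n :> nat then Dn else D r) a * (if (n - r)%N == n then Dn else D (n - r)%N) b =
  (Psi a)`_r * (Psi b)`_(n - r) + (if r == 0%N :> nat then a * Dn b else 0)
   + (if r == n :> nat then Dn a * b else 0).
  move=> [r Hr] /=; rewrite !Psi_coef.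
  case: r Hr => [|r] Hr /=.
    have -> : (0 == n)%N = false by lia.
    by rewrite subn0 eqxx hD0 andbF; ring.
  have [Heq|Hne] := eqVneq r.+1 n.
    rewrite Heq subnn eqxx (_ : (0 == n)%N = false); last by lia.
    by rewrite hD0 ltnn /= andbF; ring.
  have H1 : (r.+1 < n)%N by lia.
  have H3 : (n - r.+1 < n)%N by lia.
  have H4 : (n - r.+1 != 0)%N by lia.
  have H5 : (n - r.+1 == n)%N = false by lia.
  by rewrite H1 H3 H4 H5 /=; ring.
rewrite (eq_bigr _ (fun r _ => E2 r)) !big_split /= !sum_if_eq //.
rewrite -(coefM (Psi a) (Psi b) n) -H2 /Dn; ring.
Qed.

End Poly.


Definition HSprop n (D : nat -> A -> A) := (forall x, D 0 x = x) /\
  (forall i, (i < n)%N -> klinear f (D i)) /\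
  (forall i, (i < n)%N -> forall x y, D i (x * y) = \sum_(r < i.+1) D r x * D (i - r)%N y).

Definition upd (D : nat -> A -> A) n (E : A -> A) : nat -> A -> A :=
  fun i => if i == n then E else D i.

Definition goodE n D E := klinear f E /\
  forall a b, E (a * b) = \sum_(r < n.+1) upd D n E r a * upd D n E (n - r)%N b.

Lemma good_exists (H : (1:A) != 0) (thS : theta_surjective f) n D :
  exists E, (1 < n)%N -> HSprop n D -> goodE n D E.
Proof.
case: (classic ((1 < n)%N /\ HSprop n D)) => [[Hn [h0 [h1 h2]]]|Hno].
  have [E HE] := step_final H _ _ h0 h1 h2 thS Hn.
  by exists E.
by exists (fun x => x) => Hn Hp; exfalso; apply: Hno.
Qed.

End Work.
Arguments HSprop {k A}. Arguments goodE {k A}. Arguments upd {A}. Arguments good_exists {k A}.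

Section Final.
Variables (k A : comPzRingType) (f : {rmorphism k -> A}).
Variables (H : (1:A) != 0) (thS : theta_surjective f) (delta : A -> A) (Hd : isDer f delta).

Definition g n D : A -> A :=
  proj1_sig (constructive_indefinite_description _ (good_exists f H thS n D)).

Lemma gP n D : (1 < n)%N -> HSprop f n D -> goodE f n D (g n D).
Proof. exact: (proj2_sig (constructive_indefinite_description _ (good_exists f H thS n D))). Qed.

Fixpoint pre (m : nat) : nat -> A -> A :=
  match m with
  | 0 => fun i => if i == 0%N then (fun x => x) else delta
  | m'.+1 => upd (pre m') m'.+2 (g m'.+2 (pre m'))
  end.

Lemma pre_inv m : HSprop f m.+2 (pre m) /\ pre m 1 = delta.
Proof.
case: Hd => [[Hd1 Hd2] Hd3].
elim: m => [|m [[h0 [h1 h2]] hd]].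
  split => //; split => //; split.
    by case => [|[|i]] // _; split.
  case => [|[|i]] // _ x y.
    by rewrite big_ord_recl big_ord0 /= addr0.
  rewrite !big_ord_recl big_ord0 /= Hd3; ring.
have [G1 G2] := gP m.+2 (pre m) isT (conj h0 (conj h1 h2)).
split; last by rewrite /= /upd.
split; first by move=> x; rewrite /= /upd.
split.
  move=> i Hi; rewrite /= /upd; case: eqP => [_|Hne] //; apply: h1; lia.
move=> i Hi x y.
have [Heq|Hlt] : i = m.+2 \/ (i < m.+2)%N by lia.
  by subst i; rewrite /= {1}/upd eqxx G2.
rewrite /= /upd (_ : (i == m.+2) = false); last by lia.
rewrite h2 //; apply: eq_bigr => r _.
rewrite (_ : (r == m.+2 :> nat) = false); last by have := ltn_ord r; lia.
by rewrite (_ : ((i - r)%N == m.+2) = false) //; lia.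
Qed.

Lemma pre_cons m d i : (i <= m.+1)%N -> pre (m + d) i = pre m i.
Proof.
move=> Hi; elim: d => [|d IH]; first by rewrite addn0.
rewrite addnS /= /upd (_ : (i == (m + d).+2) = false) //; lia.
Qed.

Lemma pre_cons' m m' i : (i <= m.+1)%N -> (m <= m')%N -> pre m' i = pre m i.
Proof. move=> Hi Hm; rewrite -(subnKC Hm); exact: pre_cons. Qed.

Lemma ider_nz : isIder f delta.
Proof.
split => //.
exists (fun i => pre i i); split; last by move=> x; rewrite (pre_cons' 0 1) //; case: (pre_inv 0) => _ ->.
split; first by move=> x.
split.
  by move=> i; have [[_ [h1 _]] _] := pre_inv i; apply: h1.
move=> i x y.
have [[_ [_ h2]] _] := pre_inv i.
rewrite h2 //; apply: eq_bigr => r _.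
rewrite (pre_cons' r i); last by have := ltn_ord r; lia.
  by rewrite (pre_cons' (i - r)%N i) //; lia.
by [].
Qed.

End Final.

Theorem mainTheorem13 (k A : comPzRingType) (f : {rmorphism k -> A}) :
  theta_surjective f -> forall delta : A -> A, isDer f delta -> isIder f delta.
Proof.
move=> thS delta Hd.
case: (boolP ((1:A) == 0)) => [/eqP H10|H].
  have Hall : forall a b : A, a = b.
    by move=> a b; rewrite -(mulr1 a) -(mulr1 b) H10 !mulr0.
  split => //; exists (fun _ x => x); split; last by move=> x; apply: Hall.
  split; first by [].
  split; first by move=> i; split => *; apply: Hall.
  by move=> i x y; apply: Hall.
exact: (ider_nz _ _ _ H thS _ Hd).
Qed.
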